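(* a) For all $k' \in \mathbf{N}$ and all $k \in \mathbf{N}_-$, $$\hat{\sigma}^{k'}(\hat{\Phi}^\alpha(\mu, \cdot))(k) = \hat{\Phi}^{\hat{\sigma}^{k'}(\alpha)}(\hat{\Phi}^\alpha(\mu, k'-1), k).$$ b) For all $t' \in \mathbf{R}$ and all $t \in \mathbf{R}$, $$\sigma^{t'}(\Phi^\rho(\mu, \cdot))(t) = \Phi^{\sigma^{t'}(\rho)}(\Phi^\rho(\mu, t'-0), t).$$
   Context: Let $\mathbf{B}=\{0,1\}$ with the discrete topology, $\mathbf{N}_-=\{-1,0,1,\dots\}$, and let a function $\Phi:\mathbf{B}^n\to\mathbf{B}^n$ and an initial state $\mu\in\mathbf{B}^n$ be given. For $\lambda\in\mathbf{B}^n$, $\Phi^\lambda:\mathbf{B}^n\to\mathbf{B}^n$ is defined by $\Phi^\lambda_i(\mu)=\Phi_i(\mu)$ if $\lambda_i=1$ and $\Phi^\lambda_i(\mu)=\mu_i$ if $\lambda_i=0$; for $\alpha^0,\dots,\alpha^{k+1}\in\mathbf{B}^n$ one sets iteratively $\Phi^{\alpha^0\dots\alpha^{k}\alpha^{k+1}}(\mu)=\Phi^{\alpha^{k+1}}(\Phi^{\alpha^0\dots\alpha^k}(\mu))$. Discrete time: a computation function is a sequence $\alpha:\mathbf{N}\to\mathbf{B}^n$ (write $\alpha^k=\alpha(k)$); it is progressive if for every $i\in\{1,\dots,n\}$ the set $\{k\in\mathbf{N}\mid \alpha_i^k=1\}$ is infinite. Let $\alpha$ be progressive. The discrete time flow is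 $\hat{\Phi}^\alpha(\mu,-1)=\mu$ and $\hat{\Phi}^\alpha(\mu,k)=\Phi^{\alpha^0\dots\alpha^k}(\mu)$ for $k\ge 0$. For $k'\in\mathbf{N}$ the forgetful functions are $\hat{\sigma}^{k'}(\hat{x})(k)=\hat{x}(k+k')$ for signals $\hat{x}:\mathbf{N}_-\to\mathbf{B}^n$, and $(\hat{\sigma}^{k'}(\alpha))^k=\alpha^{k+k'}$ for computation functions. Real time: $(t_k)_{k\in\mathbf{N}}$ is a strictly increasing real sequence unbounded from above, and $\rho:\mathbf{R}\to\mathbf{B}^n$ is $\rho(t)=\alpha^0\chi_{\{t_0\}}(t)\oplus\alpha^1\chi_{\{t_1\}}(t)\oplus\dots\oplus\alpha^k\chi_{\{t_k\}}(t)\oplus\dots$, where $\chi_A$ is the characteristic function of $A\subset\mathbf{R}$ and $\alpha$ is the progressive sequence above (so for each $i$ the set $\{t\mid\rho_i(t)=1\}$ is unbounded from above). The real time flow is $\Phi^\rho(\mu,t)=\hat{\Phi}^\alpha(\mu,-1)\chi_{(-\infty,t_0)}(t)\oplus\hat{\Phi}^\alpha(\mu,0)\chi_{[t_0,t_1)}(t)\oplus\dots\oplus\hat{\Phi}^\alpha(\mu,k)\chi_{[t_k,t_{k+1})}(t)\oplus\dots$ (and similarly for any other function of this form in place of $\rho$). For a piecewise constant signal $x:\mathbf{R}\to\mathbf{B}^n$ of this kind, $x(t-0)$ denotes its left limit at $t$ (the value taken by $x$ on some interval $(t-\varepsilon,t)$). For $t'\in\mathbf{R}$ the forgetful functions are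 $\sigma^{t'}(x)(t)=x(t)$ if $t\ge t'$ and $\sigma^{t'}(x)(t)=x(t'-0)$ if $t<t'$, and $\sigma^{t'}(\rho)(t)=\rho(t)\cdot\chi_{[t',\infty)}(t)$. *)

(* Defs.v *)
From Stdlib Require Import Reals ZArith ClassicalEpsilon ClassicalDescription.
From mathcomp Require Import ssreflect ssrbool ssrfun eqtype ssrnat fintype finfun.

Set Implicit Arguments.
Unset Strict Implicit.
Unset Printing Implicit Defensive.

Definition Bn (n : nat) := {ffun 'I_n -> bool}.

Definition decb (P : Prop) : bool :=
  if excluded_middle_informative P then true else false.

Definition Phi_upd (n : nat) (Phi : Bn n -> Bn n) (lam : Bn n) (mu : Bn n) : Bn n :=
  [ffun i => if lam i then Phi mu i else mu i].

Definition progressive (n : nat) (alpha : nat -> Bn n) : Prop :=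
  forall (i : 'I_n) (N : nat), exists k : nat, (N <= k)%N /\ alpha k i = true.

Fixpoint iter_upd (n : nat) (Phi : Bn n -> Bn n) (alpha : nat -> Bn n)
  (mu : Bn n) (m : nat) : Bn n :=
  match m with
  | O => mu
  | S m' => Phi_upd Phi (alpha m') (iter_upd Phi alpha mu m')
  end.

(* discrete time flow; N_- = {-1,0,1,...} is represented by integers k >= -1.
   hatPhi alpha mu (-1) = mu, hatPhi alpha mu k = Phi^{alpha^0...alpha^k}(mu). *)
Definition hatPhi (n : nat) (Phi : Bn n -> Bn n) (alpha : nat -> Bn n)
  (mu : Bn n) (k : Z) : Bn n :=
  iter_upd Phi alpha mu (Z.to_nat (k + 1)).

Definition hat_sigma_sig (n : nat) (k' : nat) (x : Z -> Bn n) : Z -> Bn n :=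
  fun k => x (k + Z.of_nat k')%Z.

Definition hat_sigma_cf (n : nat) (k' : nat) (alpha : nat -> Bn n) : nat -> Bn n :=
  fun k => alpha (k + k')%N.

Definition strictly_increasing (t : nat -> R) : Prop :=
  forall k : nat, (t k < t (S k))%R.

Definition unbounded_above (t : nat -> R) : Prop :=
  forall M : R, exists k : nat, (M < t k)%R.

(* rho(s) = XOR_k alpha^k chi_{t_k}(s) *)
Definition rho_of (n : nat) (t : nat -> R) (alpha : nat -> Bn n) : R -> Bn n :=
  fun s => [ffun i => decb (exists k : nat, t k = s /\ alpha k i = true)].

(* real time flow of the function of the form rho_of t alpha:
   mu chi_{(-oo,t_0)} XOR hatPhi(mu,0) chi_{[t_0,t_1)} XOR ... *)
Definition realFlow (n : nat) (Phi : Bn n -> Bn n) (t : nat -> R)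
  (alpha : nat -> Bn n) (mu : Bn n) : R -> Bn n :=
  fun s => [ffun i => decb ((s < t O)%R /\ mu i = true \/
              exists k : nat, (t k <= s < t (S k))%R
                 /\ hatPhi Phi alpha mu (Z.of_nat k) i = true)].

Definition is_left_lim (n : nat) (x : R -> Bn n) (t : R) (v : Bn n) : Prop :=
  exists eps : R, (0 < eps)%R /\ forall s : R, (t - eps < s < t)%R -> x s = v.

Definition left_lim (n : nat) (x : R -> Bn n) (t : R) : Bn n :=
  epsilon (inhabits (x t)) (is_left_lim x t).

Definition sigma_sig (n : nat) (t' : R) (x : R -> Bn n) : R -> Bn n :=
  fun s => if Rle_dec t' s then x s else left_lim x t'.

Definition sigma_rho (n : nat) (t' : R) (rho : R -> Bn n) : R -> Bn n :=
  fun s => [ffun i => rho s i && (if Rle_dec t' s then true else false)].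

(* Main.v *)
Require Import Defs.
From Stdlib Require Import Reals ZArith Lra Lia ClassicalEpsilon.
From mathcomp Require Import ssreflect ssrbool ssrfun eqtype ssrnat fintype finfun.
From mathcomp Require Import zify.

Open Scope R_scope.

Definition cnt_lt (t : nat -> R) (x : R) (m : nat) :=
  (forall j, (j < m)%N -> t j < x) /\ (forall j, (m <= j)%N -> x <= t j).
Definition cnt_le (t : nat -> R) (x : R) (m : nat) :=
  (forall j, (j < m)%N -> t j <= x) /\ (forall j, (m <= j)%N -> x < t j).

Lemma si_lt {t} : strictly_increasing t -> forall {j l}, (j < l)%N -> t j < t l.
Proof.
move=> H j l; elim: l => [|l IH]; first by rewrite ltn0.
rewrite ltnS leq_eqVlt => /orP [/eqP->|/IH h]; first by apply H.
specialize (H l); lra.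
Qed.

Lemma si_le {t} : strictly_increasing t -> forall {j l}, (j <= l)%N -> t j <= t l.
Proof.
move=> H j l; rewrite leq_eqVlt => /orP [/eqP->|h]; first lra.
have := si_lt H h; lra.
Qed.

Lemma si_inj {t} : strictly_increasing t -> forall {j l}, t j = t l -> j = l.
Proof.
move=> H j l e; case: (ltngtP j l) => h //.
- have := si_lt H h; lra.
- have := si_lt H h; lra.
Qed.

Lemma cnt_lt_ex {t} : strictly_increasing t -> unbounded_above t ->
  forall x, exists m, cnt_lt t x m.
Proof.
move=> Hi Hu x; have [K0 HK] := Hu x.
suff: forall K, x <= t K -> exists m, cnt_lt t x m by move=> h; apply: (h K0); lra.
elim=> [|K IH] hK.
- exists 0%N; split; first by move=> j; rewrite ltn0.
  move=> j _; have := si_le Hi (leq0n j); lra.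
- case: (Rle_dec x (t K)) => h; first by apply IH.
  exists K.+1; split.
  + move=> j; rewrite ltnS => hj; have := si_le Hi hj; lra.
  + move=> j hj; have := si_le Hi hj; lra.
Qed.

Lemma cnt_le_ex {t} : strictly_increasing t -> unbounded_above t ->
  forall x, exists m, cnt_le t x m.
Proof.
move=> Hi Hu x; have [K0 HK] := Hu x.
suff: forall K, x < t K -> exists m, cnt_le t x m by move=> h; apply: (h K0).
elim=> [|K IH] hK.
- exists 0%N; split; first by move=> j; rewrite ltn0.
  move=> j _; have := si_le Hi (leq0n j); lra.
- case: (Rlt_dec x (t K)) => h; first by apply IH.
  exists K.+1; split.
  + move=> j; rewrite ltnS => hj; have := si_le Hi hj; lra.
  + move=> j hj; have := si_le Hi hj; lra.
Qed.

Lemma point_cnt {t x a b} : strictly_increasing t -> cnt_lt t x a -> cnt_le t x b ->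
  (b = a /\ forall k, t k <> x) \/ (b = a.+1 /\ t a = x).
Proof.
move=> Hi [a1 a2] [b1 b2].
case: (ltnP b a) => h1.
  have := a1 _ h1; have := b2 b (leqnn b); lra.
case: (ltnP a.+1 b) => h2.
  have := b1 _ h2; have := a2 a (leqnn a); have := si_lt Hi (ltnSn a); lra.
case: (ltnP a b) => h3.
- right; split; first lia.
  have := b1 a h3; have := a2 a (leqnn a); lra.
- left; split; first lia.
  move=> k e; case: (ltnP k a) => hk.
  + have := a1 _ hk; lra.
  + have := b2 k (leq_trans h3 hk); lra.
Qed.

Lemma mono_lt {t y x a b} : cnt_lt t y a -> cnt_lt t x b -> y <= x -> (a <= b)%N.
Proof.
move=> [a1 a2] [b1 b2] h; case: (ltnP b a) => // hb.
have := a1 _ hb; have := b2 b (leqnn b); lra.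
Qed.

Lemma mono_le_lt {t y x a b} : cnt_le t y a -> cnt_lt t x b -> y < x -> (a <= b)%N.
Proof.
move=> [a1 a2] [b1 b2] h; case: (ltnP b a) => // hb.
have := a1 _ hb; have := b2 b (leqnn b); lra.
Qed.

Lemma upd_zero {n} (Phi : Bn n -> Bn n) (lam mu : Bn n) :
  (forall i, lam i = false) -> Phi_upd Phi lam mu = mu.
Proof. by move=> H; apply/ffunP => i; rewrite ffunE H. Qed.

Lemma iter_zero {n} (Phi : Bn n -> Bn n) (alpha : nat -> Bn n) (mu : Bn n) {m} m' : (m <= m')%N ->
  (forall j, (m <= j)%N -> (j < m')%N -> forall i, alpha j i = false) ->
  iter_upd Phi alpha mu m' = iter_upd Phi alpha mu m.
Proof.
elim: m' => [|m' IH] hle hz.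
  by move: hle; rewrite leqn0 => /eqP->.
move: hle; rewrite leq_eqVlt => /orP [/eqP<-|hlt] //.
rewrite /= upd_zero.
  apply IH; first by rewrite -ltnS.
  move=> j h1 h2; apply hz => //; lia.
apply hz; lia.
Qed.

Lemma decb_iff (P : Prop) (b : bool) : (P <-> b = true) -> decb P = b.
Proof.
move=> h; rewrite /decb; case: (ClassicalDescription.excluded_middle_informative P) => p /=; case: b h => h //; [by move/h: p | by exfalso; apply: p; apply/h].
Qed.

Lemma decb_eq (P Q : Prop) : decb P = decb Q -> (P <-> Q).
Proof.
rewrite /decb; case: (ClassicalDescription.excluded_middle_informative P) => p /=;
  case: (ClassicalDescription.excluded_middle_informative Q) => q /= => // _; split => // *; exfalso; auto.
Qed.

Lemma decb_false (P : Prop) : decb P = false -> ~ P.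
Proof. by rewrite /decb; case: (ClassicalDescription.excluded_middle_informative P). Qed.

Lemma realFlow_eval {n} (Phi : Bn n -> Bn n) {t} alpha mu {u m} :
  cnt_le t u m -> realFlow Phi t alpha mu u = iter_upd Phi alpha mu m.
Proof.
move=> [h1 h2]; apply/ffunP => i; rewrite ffunE; apply decb_iff.
case: m h1 h2 => [|k] h1 h2.
- split.
  + case=> [[_ ->]//|[k [hk _]]]. have := h2 k (leq0n k); lra.
  + move=> e; left; split => //; exact: h2.
- split.
  + case=> [[hu _]|[k' [hk e]]].
      have := h1 0%N (ltn0Sn k); lra.
    have ek : k' = k.
      case: (ltngtP k' k) => hh //.
      * have := h1 k'.+1 hh; lra.
      * have := h2 k' hh; lra.
    move: e; rewrite ek /hatPhi.
    by replace (Z.to_nat (Z.of_nat k + 1)) with k.+1 by lia.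
  + move=> e; right; exists k; split.
      split; [apply h1; lia | apply h2; lia].
    rewrite /hatPhi.
    by replace (Z.to_nat (Z.of_nat k + 1)) with k.+1 by lia.
Qed.

Lemma iter_shift n (Phi : Bn n -> Bn n) alpha mu k' m :
  iter_upd Phi alpha mu (m + k') =
  iter_upd Phi (hat_sigma_cf k' alpha) (iter_upd Phi alpha mu k') m.
Proof. by elim: m => [|m IH] //=; rewrite IH. Qed.

Lemma part_b n (Phi : Bn n -> Bn n) (mu : Bn n) (alpha : nat -> Bn n) (t : nat -> R)
  (t' tt : R) (s : nat -> R) (beta : nat -> Bn n) :
  strictly_increasing t -> unbounded_above t ->
  strictly_increasing s -> unbounded_above s ->
  (forall u : R, rho_of s beta u = sigma_rho t' (rho_of t alpha) u) ->
  sigma_sig t' (realFlow Phi t alpha mu) tt =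
  realFlow Phi s beta (left_lim (realFlow Phi t alpha mu) t') tt.
Proof.
move=> Hti Htu Hsi Hsu H.
pose v := left_lim (realFlow Phi t alpha mu) t'.
have [m0 Hm0] := cnt_lt_ex Hti Htu t'.
have HL : is_left_lim (realFlow Phi t alpha mu) t' (iter_upd Phi alpha mu m0).
  case: m0 Hm0 => [|k] [m1 m2].
  - exists 1; split; first lra.
    move=> s0 [_ hs]; apply realFlow_eval; split; first by move=> j; rewrite ltn0.
    move=> j _; have := m2 j (leq0n j); lra.
  - have hk := m1 k (ltnSn k).
    exists (t' - t k); split; first lra.
    move=> s0 [hs1 hs2]; apply realFlow_eval; split.
    + move=> j; rewrite ltnS => hj; have := si_le Hti hj; lra.
    + move=> j hj; have := m2 j hj; lra.
have Hv : v = iter_upd Phi alpha mu m0.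
  have HL' : is_left_lim (realFlow Phi t alpha mu) t' v.
    by apply: epsilon_spec; exists (iter_upd Phi alpha mu m0).
  case: HL => [e1 [he1 f1]]; case: HL' => [e2 [he2 f2]].
  have [e [hep [hm1 hm2]]] : exists e, 0 < e /\ e <= e1 /\ e <= e2.
    exists (Rmin e1 e2); split; [by apply Rmin_glb_lt | split; [apply Rmin_l | apply Rmin_r]].
  rewrite -(f2 (t' - e / 2)); last lra.
  rewrite (f1 (t' - e / 2)) //; lra.
rewrite -/v.
have rel_ge : forall u, t' <= u -> forall i,
   (exists k, s k = u /\ beta k i = true) <-> (exists j, t j = u /\ alpha j i = true).
  move=> u hu i; have := congr1 (fun f : Bn n => f i) (H u).
  rewrite /rho_of /sigma_rho !ffunE; destruct (Rle_dec t' u) as [hh|hh]; last lra.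
  by rewrite /= andbT; apply: decb_eq.
have rel_lt : forall u, u < t' -> forall i, ~ (exists k, s k = u /\ beta k i = true).
  move=> u hu i; have := congr1 (fun f : Bn n => f i) (H u).
  rewrite /rho_of /sigma_rho !ffunE; destruct (Rle_dec t' u) as [h|h]; first lra.
  by rewrite /= andbF; apply: decb_false.
have B0 : forall q, (forall k, (k < q)%N -> s k < t') -> iter_upd Phi beta v q = v.
  move=> q hq; rewrite (@iter_zero _ _ _ _ 0%N) //.
  move=> j _ hj i; case E: (beta j i) => //; exfalso.
  by apply: (rel_lt (s j) (hq j hj) i); exists j.
have Hzt : forall j, t' <= t j -> (forall k, s k <> t j) -> forall i, alpha j i = false.
  move=> j hj hn i; case E: (alpha j i) => //; exfalso.
  have [k [hk _]] : exists k, s k = t j /\ beta k i = true.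
    by apply/rel_ge => //; exists j.
  exact: hn hk.
have Hzs : forall k, t' <= s k -> (forall j, t j <> s k) -> forall i, beta k i = false.
  move=> k hk hn i; case E: (beta k i) => //; exfalso.
  have [j [hj _]] : exists j, t j = s k /\ alpha j i = true.
    by apply/rel_ge => //; exists k.
  exact: hn hj.
have Heq : forall j k, t j = s k -> t' <= s k -> beta k = alpha j.
  move=> j k e hk; apply/ffunP => i; apply/Bool.eq_iff_eq_true; split => b.
  - have [j' [e' a']] : exists j', t j' = s k /\ alpha j' i = true.
      by apply/rel_ge => //; exists k.
    by rewrite -(si_inj Hti (etrans e' (esym e))).
  - have [k' [e' a']] : exists k', s k' = s k /\ beta k' i = true.
      by apply/rel_ge => //; exists j.
    by rewrite -(si_inj Hsi e').
have Pstep : forall x mt mt' ms ms', t' <= x -> cnt_lt t x mt -> cnt_le t x mt' ->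
    cnt_lt s x ms -> cnt_le s x ms' ->
    iter_upd Phi alpha mu mt = iter_upd Phi beta v ms ->
    iter_upd Phi alpha mu mt' = iter_upd Phi beta v ms'.
  move=> x mt mt' ms ms' hx ht1 ht2 hs1 hs2 IH.
  case: (point_cnt Hti ht1 ht2) => [[-> tn]|[-> te]];
  case: (point_cnt Hsi hs1 hs2) => [[-> sn]|[-> se]] //=.
  - rewrite (upd_zero _ (beta ms)) //; apply Hzs; first lra.
    by move=> j; rewrite se.
  - rewrite upd_zero //; apply Hzt; first lra.
    by move=> k; rewrite te.
  - by rewrite (Heq mt ms) ?IH // ?te ?se //; lra.
have NoEv : forall q x mt, t' <= x -> cnt_lt s x q -> cnt_lt t x mt ->
    (forall k, (k < q)%N -> s k < t') ->
    iter_upd Phi alpha mu mt = iter_upd Phi beta v q.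
  move=> q x mt hx hq hmt hk; rewrite B0 // Hv.
  apply: iter_zero; first exact: (mono_lt Hm0 hmt hx).
  move=> j h1 h2; apply Hzt; first exact: (proj2 Hm0 j h1).
  move=> k e; case: (ltnP k q) => hkq.
  - have := hk k hkq; have := proj2 Hm0 j h1; lra.
  - have := proj2 hq k hkq; have := proj1 hmt j h2; lra.
have Strict : forall q x mt, t' <= x -> cnt_lt s x q -> cnt_lt t x mt ->
    iter_upd Phi alpha mu mt = iter_upd Phi beta v q.
  elim=> [|k IH] x mt hx hq hmt.
    by apply: (NoEv 0%N x) => // k; rewrite ltn0.
  case: (Rlt_dec (s k) t') => hsk.
    apply: (NoEv k.+1 x) => // k'; rewrite ltnS => h.
    have := si_le Hsi h; lra.
  have [mt0 H0] := cnt_lt_ex Hti Htu (s k).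
  have [mt1 H1] := cnt_le_ex Hti Htu (s k).
  have hsl : cnt_lt s (s k) k.
    split.
      by move=> j hj; apply: (si_lt Hsi hj).
    by move=> j hj; apply: (si_le Hsi hj).
  have hsle : cnt_le s (s k) k.+1.
    split.
      by move=> j; rewrite ltnS => hj; apply: (si_le Hsi hj).
    by move=> j hj; apply: (si_lt Hsi hj).
  have hkx : s k < x by apply (proj1 hq k (ltnSn k)).
  have E1 := Pstep _ _ _ _ _ (Rnot_lt_le _ _ hsk) H0 H1 hsl hsle
    (IH (s k) mt0 (Rnot_lt_le _ _ hsk) hsl H0).
  rewrite -E1; apply: iter_zero; first exact: (mono_le_lt H1 hmt hkx).
  move=> j h1 h2.
  have a1 := proj2 H1 j h1; have a2 := proj1 hmt j h2.
  apply Hzt; first lra.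
  move=> k' e; case: (ltnP k' k.+1) => hk'.
  - rewrite ltnS in hk'; have := si_le Hsi hk'; lra.
  - have := proj2 hq k' hk'; lra.
rewrite /sigma_sig; case: (Rle_dec t' tt) => htt.
- have [M HM] := cnt_le_ex Hti Htu tt.
  have [Q HQ] := cnt_le_ex Hsi Hsu tt.
  have [M0 HM0] := cnt_lt_ex Hti Htu tt.
  have [Q0 HQ0] := cnt_lt_ex Hsi Hsu tt.
  rewrite (realFlow_eval _ _ _ HM) (realFlow_eval _ _ _ HQ).
  exact: (Pstep tt M0 M Q0 Q htt HM0 HM HQ0 HQ (Strict Q0 tt M0 htt HQ0 HM0)).
- have [Q HQ] := cnt_le_ex Hsi Hsu tt.
  rewrite (realFlow_eval _ _ _ HQ) B0 //.
  move=> k hk; have := proj1 HQ k hk; lra.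
Qed.

Theorem theorem29 (n : nat) (Phi : Bn n -> Bn n) (mu : Bn n)
  (alpha : nat -> Bn n) (t : nat -> R) :
  progressive alpha ->
  strictly_increasing t ->
  unbounded_above t ->
  (* a) *)
  (forall (k' : nat) (k : Z), (-1 <= k)%Z ->
     hat_sigma_sig k' (hatPhi Phi alpha mu) k =
     hatPhi Phi (hat_sigma_cf k' alpha)
       (hatPhi Phi alpha mu (Z.of_nat k' - 1)%Z) k)
  /\
  (* b) the flow of sigma^{t'}(rho) is computed from any representation
        (s, beta) of sigma^{t'}(rho) as a function of the form above *)
  (forall (t' tt : R) (s : nat -> R) (beta : nat -> Bn n),
     strictly_increasing s -> unbounded_above s ->
     (forall u : R, rho_of s beta u = sigma_rho t' (rho_of t alpha) u) ->
     sigma_sig t' (realFlow Phi t alpha mu) tt =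
     realFlow Phi s beta (left_lim (realFlow Phi t alpha mu) t') tt).
Proof.
move=> _ Hti Htu; split.
- move=> k' k hk; rewrite /hat_sigma_sig /hatPhi.
  replace (Z.to_nat (Z.of_nat k' - 1 + 1)) with k' by lia.
  replace (Z.to_nat (k + Z.of_nat k' + 1)) with (Z.to_nat (k + 1) + k')%N by lia.
  by rewrite iter_shift.
- move=> t' tt s beta Hsi Hsu H; exact: part_b.
Qed.
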